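(* Let $\Omega\subseteq\mathbb{R}^{m\times m}$, let $d:\Omega^2\to\mathbb{R}$ be a pseudometric, let $n\ge2$ and let $d_F:\Omega^n\to\mathbb{R}$, $d_F(A_1,\dots,A_n)=\min_{B\in\Omega}\sum_{i=1}^n d(A_i,B)$, be the Fermat distance function induced by $d$. Let $\Omega'=\Omega/\!\sim_d$, where $A\sim_d B$ iff $d(A,B)=0$, and write $[A]$ for the equivalence class of $A$. Let $d'_F:\Omega'^n\to\mathbb{R}$ be given by $d'_F([A_1],\dots,[A_n])=d_F(A_1,\dots,A_n)$. Then $d'_F$ is an $n$-metric on $\Omega'$.
   Context: A pseudometric on $\Omega$ is a map $d$ with $d(A,B)\ge0$, $d(A,A)=0$, $d(A,B)=d(B,A)$, $d(A,C)\le d(A,B)+d(B,C)$; $\sim_d$ is then an equivalence relation. For a set $X$, a map $D:X^n\to\mathbb{R}$ is an $n$-metric if for all $x_1,\dots,x_{n+1}\in X$ and all permutations $\sigma$ of $[n]$: $D(x_{1:n})\ge0$; $D(x_{1:n})=0$ iff $x_1=\dots=x_n$; $D(x_{1:n})=D(x_{\sigma(1:n)})$; and $D(x_{1:n})\le\sum_{i=1}^n D(x^i_{1:n,n+1})$, where $x_{1:n}=(x_1,\dots,x_n)$, $x_{\sigma(1:n)}$ has $i$-th entry $x_{\sigma(i)}$, and $x^i_{1:n,n+1}$ is $x_{1:n}$ with $x_i$ replaced by $x_{n+1}$. *)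

(* Defs.v *)
From HB Require Import structures.
From mathcomp Require Import all_boot all_order all_algebra all_fingroup.
From mathcomp Require Import reals.
From Stdlib Require Import ClassicalEpsilon.
Set Implicit Arguments. Unset Strict Implicit. Unset Printing Implicit Defensive.
Import Order.TTheory GRing.Theory Num.Theory.
Local Open Scope ring_scope.

Definition is_pseudometric (R : realType) (T : Type) (Om : T -> Prop)
  (d : T -> T -> R) : Prop :=
  forall A B C, Om A -> Om B -> Om C ->
    [/\ 0 <= d A B, d A A = 0, d A B = d B A & d A C <= d A B + d B C].

Definition is_n_metric (R : realType) (X : Type) (n : nat)
  (D : ('I_n -> X) -> R) : Prop :=
  forall (x : 'I_n -> X) (y : X),
    [/\ 0 <= D x,
        D x = 0 <-> (forall i j, x i = x j),
        forall s : 'S_n, D x = D (fun i => x (s i))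
      & D x <= \sum_(i < n) D (fun j => if j == i then y else x j)].

Definition is_fermat_distance (R : realType) (T : Type) (Om : T -> Prop)
  (d : T -> T -> R) (n : nat) (dF : ('I_n -> T) -> R) : Prop :=
  forall A : 'I_n -> T, (forall i, Om (A i)) ->
    (exists2 B, Om B & dF A = \sum_(i < n) d (A i) B) /\
    (forall B, Om B -> dF A <= \sum_(i < n) d (A i) B).

Definition dclass (R : realType) (T : Type) (Om : T -> Prop)
  (d : T -> T -> R) (A : T) : T -> Prop := fun B => Om B /\ d A B = 0.

Definition quot (R : realType) (T : Type) (Om : T -> Prop) (d : T -> T -> R) :=
  {S : T -> Prop | exists A, Om A /\ S = dclass Om d A}.

Definition qrep (R : realType) (T : Type) (Om : T -> Prop) (d : T -> T -> R)
  (S : quot Om d) : T :=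
  proj1_sig (constructive_indefinite_description _ (proj2_sig S)).

Definition quot_fermat (R : realType) (T : Type) (Om : T -> Prop)
  (d : T -> T -> R) (n : nat) (dF : ('I_n -> T) -> R) :
  ('I_n -> quot Om d) -> R :=
  fun S => dF (fun i => qrep (S i)).
Arguments quot_fermat {R T} Om d {n} dF.

(* Main.v *)
Require Import Defs.
From HB Require Import structures.
From mathcomp Require Import all_boot all_order all_algebra all_fingroup.
From mathcomp Require Import reals.
From mathcomp Require Import lra.
From Stdlib Require Import ClassicalEpsilon FunctionalExtensionality PropExtensionality ProofIrrelevance.
Set Implicit Arguments. Unset Strict Implicit. Unset Printing Implicit Defensive.
Import Order.TTheory GRing.Theory Num.Theory.
Local Open Scope ring_scope.

Lemma qrepP (R : realType) (T : Type) (Om : T -> Prop) (d : T -> T -> R)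
  (S : quot Om d) : Om (qrep S) /\ proj1_sig S = dclass Om d (qrep S).
Proof.
rewrite /qrep; case: (constructive_indefinite_description _ _) => A [HA E] /=.
by split.
Qed.

Lemma qeq (R : realType) (T : Type) (Om : T -> Prop) (d : T -> T -> R)
  (S1 S2 : quot Om d) : proj1_sig S1 = proj1_sig S2 -> S1 = S2.
Proof.
case: S1 => [P1 h1]; case: S2 => [P2 h2] /= E; subst P2.
by rewrite (proof_irrelevance _ h1 h2).
Qed.

Lemma fermat_ge0 (R : realType) (T : Type) (Om : T -> Prop) (d : T -> T -> R)
  n (dF : ('I_n -> T) -> R) :
  is_pseudometric Om d -> is_fermat_distance Om d dF ->
  forall A, (forall i, Om (A i)) -> 0 <= dF A.
Proof.
move=> Hd HF A HA; have [[B HB ->] _] := HF A HA.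
by apply: sumr_ge0 => i _; have [] := Hd (A i) B B (HA i) HB HB.
Qed.

Theorem theorem3 (R : realType) (m : nat) (Om : 'M[R]_m -> Prop)
  (d : 'M[R]_m -> 'M[R]_m -> R) (n : nat) (dF : ('I_n -> 'M[R]_m) -> R) :
  is_pseudometric Om d -> (2 <= n)%N -> is_fermat_distance Om d dF ->
  is_n_metric (quot_fermat Om d dF).
Proof.
move=> Hd Hn HF x y.
rewrite /quot_fermat.
set A := fun i => qrep (x i).
have HA : forall i, Om (A i) by move=> i; case: (qrepP (x i)).
have ge0 : forall X Y, Om X -> Om Y -> 0 <= d X Y.
  by move=> X Y HX HY; have [] := Hd X Y Y HX HY HY.
have sym : forall X Y, Om X -> Om Y -> d X Y = d Y X.
  by move=> X Y HX HY; have [] := Hd X Y Y HX HY HY.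
have tri : forall X Y Z, Om X -> Om Y -> Om Z -> d X Z <= d X Y + d Y Z.
  by move=> X Y Z HX HY HZ; have [] := Hd X Y Z HX HY HZ.
have refl : forall X, Om X -> d X X = 0.
  by move=> X HX; have [] := Hd X X X HX HX HX.
split.
- exact: fermat_ge0 Hd HF A HA.
- split.
  + move=> H0.
    have [[B HB EB] _] := HF A HA.
    have Hz : forall i, d (A i) B = 0.
      move=> i; move: EB; rewrite H0 => /esym /psumr_eq0P; apply => //.
      by move=> k _; apply: ge0.
    move=> i j; apply: qeq.
    have [_ ->] := qrepP (x i); have [_ ->] := qrepP (x j).
    rewrite /dclass; apply: functional_extensionality => Z.
    apply: propositional_extensionality.
    have dij : d (A i) (A j) = 0.
      apply/eqP; rewrite eq_le andbC (ge0 _ _ (HA i) (HA j)) /=.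
      have := tri _ _ _ (HA i) HB (HA j); rewrite Hz (sym B) // Hz; lra.
    split => -[HZ E]; split => //; apply/eqP.
      rewrite eq_le andbC (ge0 _ _ (HA j) HZ) /=.
      have := tri _ _ _ (HA j) (HA i) HZ; rewrite (sym (A j) (A i)) // dij -/(A i) E; lra.
    rewrite eq_le andbC (ge0 _ _ (HA i) HZ) /=.
    have := tri _ _ _ (HA i) (HA j) HZ; rewrite dij -/(A j) E; lra.
  + move=> Heq.
    have [_ HFl] := HF A HA.
    pose i0 : 'I_n := Ordinal (ltnW Hn).
    have Hz : forall i, d (A i) (A i0) = 0.
      move=> i; have [HO E] := qrepP (x i0).
      have : proj1_sig (x i0) (A i0) by rewrite E; split => //; apply: refl.
      by rewrite (Heq i0 i); have [_ ->] := qrepP (x i) => -[].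
    apply/eqP; rewrite eq_le andbC (fermat_ge0 Hd HF HA) /=.
    have := HFl (A i0) (HA i0); rewrite big1 //.
- move=> s.
  have HAs : forall i, Om (A (s i)) by [].
  have [[B HB EB] HFl] := HF A HA.
  have [[B' HB' EB'] HFl'] := HF _ HAs.
  rewrite -/A; apply/eqP; rewrite eq_le; apply/andP; split.
    rewrite EB'; have := HFl B' HB'.
    by rewrite (reindex_inj (@perm_inj _ s)).
  rewrite EB; have := HFl' B HB.
  by move=> H; rewrite (reindex_inj (@perm_inj _ s)).
-
  set C := qrep y.
  have HC : Om C by case: (qrepP y).
  pose A' i := fun j => qrep (if j == i then y else x j).
  have A'E : forall i j, A' i j = if j == i then C else A j.
    by move=> i j; rewrite /A'; case: (j == i).
  have HA' : forall i j, Om (A' i j) by move=> i j; rewrite A'E; case: (j == i).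
  pose i0 : 'I_n := Ordinal (ltnW Hn).
  pose i1 : 'I_n := Ordinal Hn.
  have ne01 : i1 != i0 by [].
  have [[B0 HB0 E0] _] := HF _ (HA' i0).
  have [[B1 HB1 E1] _] := HF _ (HA' i1).
  have Dge0 : forall i, 0 <= dF (A' i) by move=> i; apply: (fermat_ge0 Hd HF (HA' i)).
  rewrite (bigD1 i0) //= (bigD1 (P := fun i => i != i0) i1) //=.
  rewrite -/(A' i0) -/(A' i1) E0 E1.
  have rest : 0 <= \sum_(i < n | (i != i0) && (i != i1)) dF (A' i)
    by apply: sumr_ge0 => i _; apply: Dge0.
  have S0 : \sum_(i < n) d (A' i0 i) B0 =
            d C B0 + \sum_(i < n | i != i0) d (A i) B0.
    rewrite (bigD1 i0) //= A'E eqxx; congr (_ + _).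
    by apply: eq_bigr => i /negbTE Hi; rewrite A'E Hi.
  have S1 : \sum_(i < n) d (A' i1 i) B1 =
            d C B1 + (d (A i0) B1 + \sum_(i < n | (i != i1) && (i != i0)) d (A i) B1).
    rewrite (bigD1 i1) //= A'E eqxx; congr (_ + _).
    rewrite (bigD1 (P := fun i => i != i1) i0) 1?eq_sym //= A'E eq_sym (negbTE ne01).
    congr (_ + _).
    by apply: eq_bigr => i /andP [/negbTE Hi _]; rewrite A'E Hi.
  have rest1 : 0 <= \sum_(i < n | (i != i1) && (i != i0)) d (A i) B1
    by apply: sumr_ge0 => i _; apply: ge0.
  have [_ HFl] := HF A HA.
  have H := HFl B0 HB0.
  rewrite (bigD1 i0) //= in H.
  have T := tri _ _ _ (HA i0) HB1 HB0.
  have T2 := tri _ _ _ HB1 HC HB0.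
  rewrite (sym B1 C) // in T2.
  move: rest; rewrite /A' => rest. lra.
Qed.
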